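(* Let $\alpha_0>0$, $\omega_0\neq 0$, and $$\alpha^*_{pl}(\omega)=\alpha_0|\omega|+i\frac{2}{\pi}\alpha_0\,\omega\log\left|\frac{\omega}{\omega_0}\right|,\qquad\omega\in\mathbb{R}.$$ Then the function $K(\vec x,t)=\frac{1}{\sqrt{2\pi}}\mathcal{F}^{-1}\{e^{-\alpha^*_{pl}(\cdot)|\vec x|}\}(t)$ is not causal.
   Context: Fourier convention: $\mathcal{F}^{-1}\{\hat f\}(t)=\frac{1}{\sqrt{2\pi}}\int_{\mathbb{R}}e^{-i\omega t}\hat f(\omega)\,d\omega$ (tempered distributions). $K$ is causal if $t\mapsto K(\vec x,t)$ vanishes for $t<0$ for every $\vec x\in\mathbb{R}^3$. *)

(* Defs.v *)
From Stdlib Require Import Reals.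
From Coquelicot Require Import Coquelicot.
Open Scope R_scope.

Definition vec3 : Type := (R * R * R)%type.
Definition norm3 (x : vec3) : R :=
  let '(x1, x2, x3) := x in sqrt (x1 * x1 + x2 * x2 + x3 * x3).

Definition cexp (z : C) : C :=
  (exp (Re z) * cos (Im z), exp (Re z) * sin (Im z)).

Definition alpha_pl (a0 w0 w : R) : C :=
  (a0 * Rabs w, 2 / PI * a0 * w * ln (Rabs (w / w0))).

(* Inverse Fourier transform with the paper's convention, as an improper
   (absolutely convergent) integral over R:
   F^{-1}{f}(t) = 1/sqrt(2 pi) * int_R e^{-i w t} f(w) dw.
   [is_invFT f t v] : the integral converges and F^{-1}{f}(t) = v. *)
Definition is_invFT (f : R -> C) (t : R) (v : C) : Prop :=
  exists I : C,
    is_RInt_gen (fun w : R => Cmult (cexp (0, - (w * t))) (f w))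
      (Rbar_locally m_infty) (Rbar_locally p_infty) I
    /\ v = Cmult (RtoC (/ sqrt (2 * PI))) I.

Definition is_K (a0 w0 : R) (x : vec3) (t : R) (v : C) : Prop :=
  exists u : C,
    is_invFT (fun w => cexp (Copp (Cmult (alpha_pl a0 w0 w) (RtoC (norm3 x))))) t u
    /\ v = Cmult (RtoC (/ sqrt (2 * PI))) u.

(* Main.v *)
Require Import Defs.
From Stdlib Require Import Reals Lra.
From Coquelicot Require Import Coquelicot.
Open Scope R_scope.

Lemma ln_le_sub1 (y : R) : 0 < y -> ln y <= y - 1.
Proof.
  intros Hy. rewrite <- (ln_exp (y - 1)). apply ln_le; [exact Hy|].
  pose proof (exp_ineq1_le (y - 1)). lra.
Qed.

Lemma uln_bound (u : R) : 0 < u -> u <= 1 ->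
  0 <= - (u * ln u) <= 2 * (sqrt u - u).
Proof.
  intros H0 H1.
  assert (Hs : 0 < sqrt u) by (apply sqrt_lt_R0; lra).
  assert (Hu : u = sqrt u * sqrt u) by (rewrite sqrt_sqrt; lra).
  assert (Hs1 : sqrt u <= 1).
  { rewrite <- sqrt_1. apply sqrt_le_1_alt. lra. }
  assert (Hl : ln u <= 0).
  { rewrite <- ln_1. apply ln_le; lra. }
  split.
  - assert (0 <= u * - ln u) by (apply Rmult_le_pos; lra). lra.
  - assert (Hlu : ln u = 2 * ln (sqrt u)).
    { rewrite Hu at 1. rewrite ln_mult by lra. ring. }
    pose proof (ln_le_sub1 (/ sqrt u) ltac:(apply Rinv_0_lt_compat; lra)) as Hq.
    rewrite ln_Rinv in Hq by lra.
    rewrite Hlu.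
    set (s := sqrt u) in *.
    assert (Hq' : - ln s * s <= (/ s - 1) * s) by (apply Rmult_le_compat_r; lra).
    replace ((/ s - 1) * s) with (1 - s) in Hq' by (field; lra).
    rewrite Hu. 
    assert (0 <= s) by lra.
    nra.
Qed.

Definition gexp (c w : R) : R := exp (- (Rabs w / c)).

Definition Pg (c x : R) : R :=
  if Rle_dec 0 x then c * (1 - exp (- (x / c))) else - (c * (1 - exp (x / c))).

Lemma Pg_pos c x : 0 <= x -> Pg c x = c * (1 - exp (- (x / c))).
Proof. intros H. unfold Pg. destruct (Rle_dec 0 x); [reflexivity | lra]. Qed.

Lemma Pg_neg c x : x <= 0 -> Pg c x = - (c * (1 - exp (x / c))).
Proof.
  intros H. unfold Pg. destruct (Rle_dec 0 x); [|reflexivity].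
  assert (x = 0) by lra. subst. unfold Rdiv. rewrite Rmult_0_l, Ropp_0, exp_0. ring.
Qed.

Lemma gexp_RInt0 c x : 0 < c -> is_RInt (gexp c) 0 x (Pg c x).
Proof.
  intros Hc. destruct (Rle_dec 0 x) as [Hx|Hx].
  - rewrite Pg_pos by lra.
    assert (H := is_RInt_derive (fun w => - c * exp (- (w / c))) (fun w => exp (- (w / c))) 0 x).
    replace (c * (1 - exp (- (x / c)))) with
      (minus (- c * exp (- (x / c))) (- c * exp (- (0 / c)))).
    2:{ unfold minus, plus, opp; simpl. replace (- (0/c)) with 0 by (field; lra).
        rewrite exp_0. ring. }
    eapply is_RInt_ext; [| apply H].
    + intros y Hy. rewrite Rmin_left in Hy by lra. rewrite Rmax_right in Hy by lra.
      unfold gexp. rewrite Rabs_pos_eq by lra. reflexivity.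
    + intros y _. auto_derive; [exact I|]. unfold Rdiv; field; lra.
    + intros y _. apply (ex_derive_continuous (K:=R_AbsRing) (V:=R_NormedModule)). auto_derive. exact I.
  - rewrite Pg_neg by lra.
    assert (H := is_RInt_derive (fun w => c * exp (w / c)) (fun w => exp (w / c)) 0 x).
    replace (- (c * (1 - exp (x / c)))) with
      (minus (c * exp (x / c)) (c * exp (0 / c))).
    2:{ unfold minus, plus, opp; simpl. replace (0/c) with 0 by (field; lra).
        rewrite exp_0. ring. }
    eapply is_RInt_ext; [| apply H].
    + intros y Hy. rewrite Rmin_right in Hy by lra. rewrite Rmax_left in Hy by lra.
      unfold gexp. rewrite Rabs_left by lra. f_equal. field. lra.
    + intros y _. auto_derive; [exact I|]. unfold Rdiv; field; lra.
    + intros y _. apply (ex_derive_continuous (K:=R_AbsRing) (V:=R_NormedModule)). auto_derive. exact I.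
Qed.

Lemma gexp_RInt c a b : 0 < c -> is_RInt (gexp c) a b (Pg c b - Pg c a).
Proof.
  intros Hc.
  assert (H1 := is_RInt_swap _ _ _ _ (gexp_RInt0 c a Hc)).
  assert (H2 := is_RInt_Chasles _ _ _ _ _ _ H1 (gexp_RInt0 c b Hc)).
  replace (Pg c b - Pg c a) with (plus (opp (Pg c a)) (Pg c b)) by (unfold plus, opp; simpl; ring).
  exact H2.
Qed.

Lemma exp_le_exp' x y : x <= y -> exp x <= exp y.
Proof. intros [H|H]; [left; apply exp_increasing; exact H| subst; lra]. Qed.

Lemma norm_RInt_gexp {V : NormedModule R_AbsRing} (f : R -> V) c x y A :
  0 < c -> (forall w, norm (f w) <= gexp c w) -> is_RInt f x y A ->
  norm A <= Rabs (Pg c y - Pg c x).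
Proof.
  intros Hc Hf HA. destruct (Rle_dec x y) as [Hxy|Hxy].
  - eapply Rle_trans; [eapply norm_RInt_le; [exact Hxy| intros w _; apply Hf | exact HA | apply gexp_RInt; exact Hc]|].
    apply Rle_abs.
  - rewrite <- norm_opp.
    eapply Rle_trans; [eapply norm_RInt_le; [| intros w _; apply Hf | apply is_RInt_swap; exact HA | apply gexp_RInt; exact Hc]|]; [lra|].
    rewrite Rabs_minus_sym. apply Rle_abs.
Qed.

Lemma tail_pos {V : NormedModule R_AbsRing} (f : R -> V) c M x y A :
  0 < c -> (forall w, norm (f w) <= gexp c w) -> 0 <= M -> M <= x -> M <= y ->
  is_RInt f x y A -> norm A <= c * exp (- (M / c)).
Proof.
  intros Hc Hf HM Hx Hy HA. eapply Rle_trans; [eapply norm_RInt_gexp; eauto|].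
  rewrite !Pg_pos by lra.
  assert (exp (- (x / c)) <= exp (- (M / c))).
  { apply exp_le_exp'. apply Ropp_le_contravar. unfold Rdiv. apply Rmult_le_compat_r; [|lra].
    left; apply Rinv_0_lt_compat; lra. }
  assert (exp (- (y / c)) <= exp (- (M / c))).
  { apply exp_le_exp'. apply Ropp_le_contravar. unfold Rdiv. apply Rmult_le_compat_r; [|lra].
    left; apply Rinv_0_lt_compat; lra. }
  pose proof (exp_pos (- (x / c))). pose proof (exp_pos (- (y / c))).
  apply Rabs_le. split; nra.
Qed.

Lemma tail_neg {V : NormedModule R_AbsRing} (f : R -> V) c M x y A :
  0 < c -> (forall w, norm (f w) <= gexp c w) -> 0 <= M -> x <= - M -> y <= - M ->
  is_RInt f x y A -> norm A <= c * exp (- (M / c)).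
Proof.
  intros Hc Hf HM Hx Hy HA. eapply Rle_trans; [eapply norm_RInt_gexp; eauto|].
  rewrite !Pg_neg by lra.
  assert (exp (x / c) <= exp (- (M / c))).
  { apply exp_le_exp'. unfold Rdiv. rewrite Ropp_mult_distr_l. apply Rmult_le_compat_r; [|lra].
    left; apply Rinv_0_lt_compat; lra. }
  assert (exp (y / c) <= exp (- (M / c))).
  { apply exp_le_exp'. unfold Rdiv. rewrite Ropp_mult_distr_l. apply Rmult_le_compat_r; [|lra].
    left; apply Rinv_0_lt_compat; lra. }
  pose proof (exp_pos (x / c)). pose proof (exp_pos (y / c)).
  apply Rabs_le. split; nra.
Qed.

Lemma small_tail c (eps : R) : 0 < c -> 0 < eps ->
  c * exp (- ((c * (Rabs (ln (2 * c / eps)) + 1)) / c)) < eps / 2.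
Proof.
  intros Hc He.
  replace ((c * (Rabs (ln (2 * c / eps)) + 1)) / c) with (Rabs (ln (2 * c / eps)) + 1) by (field; lra).
  assert (H2 : 0 < 2 * c / eps) by (unfold Rdiv; apply Rmult_lt_0_compat; [lra| apply Rinv_0_lt_compat; lra]).
  assert (exp (- (Rabs (ln (2 * c / eps)) + 1)) < exp (- ln (2 * c / eps))).
  { apply exp_increasing. pose proof (Rle_abs (ln (2 * c / eps))). lra. }
  rewrite (exp_Ropp (ln _)), exp_ln in H by lra.
  replace (eps / 2) with (c * / (2 * c / eps)) by (field; lra).
  apply Rmult_lt_compat_l; lra.
Qed.

Lemma ag_lemma {G : AbelianGroup} (A u B : G) : minus (plus (plus A u) B) u = plus A B.
Proof.
  unfold minus. rewrite <- (plus_assoc A u B), (plus_comm u B), (plus_assoc A B u).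
  rewrite <- plus_assoc. transitivity (plus (plus A B) (zero (G:=G))); [apply (f_equal (plus (plus A B))); apply plus_opp_r | apply plus_zero_r].
Qed.

Lemma exists_gen {V : CompleteNormedModule R_AbsRing} (f : R -> V) c :
  0 < c -> (forall w, norm (f w) <= gexp c w) -> (forall a b, ex_RInt f a b) ->
  exists l, is_RInt_gen f (Rbar_locally m_infty) (Rbar_locally p_infty) l.
Proof.
  intros Hc Hf Hex. unfold is_RInt_gen.
  assert (H1 : filter_prod (Rbar_locally m_infty) (Rbar_locally p_infty)
    (fun ab : R * R => (exists y : V, is_RInt f (fst ab) (snd ab) y) /\
       (forall y1 y2 : V, is_RInt f (fst ab) (snd ab) y1 -> is_RInt f (fst ab) (snd ab) y2 -> y1 = y2))).
  { apply filter_forall. intros ab. split; [apply Hex|].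
    intros y1 y2 Y1 Y2. rewrite <- (is_RInt_unique _ _ _ _ Y1). apply is_RInt_unique; exact Y2. }
  apply (proj1 (filterlimi_locally_cauchy (fun ab y => is_RInt f (fst ab) (snd ab) y) H1)).
  intros eps.
  set (M := c * (Rabs (ln (2 * c / eps)) + 1)).
  assert (HM : 0 <= M).
  { unfold M. apply Rmult_le_pos; [lra|]. pose proof (Rabs_pos (ln (2 * c / eps))). lra. }
  pose proof (small_tail c eps Hc (cond_pos eps)) as Hs. fold M in Hs.
  exists (fun ab : R * R => fst ab < - M /\ M < snd ab). split.
  - apply Filter_prod with (fun x => x < - M) (fun y => M < y).
    + exists (- M). auto.
    + exists M. auto.
    + intros x y Hx Hy. simpl. auto.
  - intros [ua ub] [va vb] [Hua Hub] [Hva Hvb] u' v' Hu Hv. simpl in *.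
    destruct (Hex va ua) as [A HA]. destruct (Hex ub vb) as [B HB].
    assert (Hw := is_RInt_Chasles _ _ _ _ _ _ (is_RInt_Chasles _ _ _ _ _ _ HA Hu) HB).
    assert (Ev : v' = plus (plus A u') B).
    { rewrite <- (is_RInt_unique _ _ _ _ Hv). apply is_RInt_unique; exact Hw. }
    subst v'.
    apply (norm_compat1 (K:=R_AbsRing) (V:=V)).
    replace (minus (plus (plus A u') B) u') with (plus A B).
    2:{ symmetry. exact (ag_lemma (G:=V) A u' B). }
    eapply Rle_lt_trans; [apply norm_triangle|].
    assert (norm A <= c * exp (- (M / c))) by (eapply tail_neg; eauto; lra).
    assert (norm B <= c * exp (- (M / c))) by (eapply tail_pos; eauto; lra).
    lra.
Qed.

Definition th (a0 w0 r t w : R) : R := - (w * t) + - (2 / PI * a0 * w * ln (Rabs (w / w0)) * r).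
Definition EE (a0 r w : R) : R := exp (- (a0 * Rabs w * r)).

Lemma feq a0 w0 r t w :
  Cmult (cexp (0, - (w * t))) (cexp (Copp (Cmult (alpha_pl a0 w0 w) (RtoC r)))) =
  (EE a0 r w * cos (th a0 w0 r t w), EE a0 r w * sin (th a0 w0 r t w)).
Proof.
  unfold cexp, alpha_pl, Cmult, Copp, RtoC, EE, th. simpl.
  rewrite exp_0, cos_plus, sin_plus.
  replace (- (a0 * Rabs w * r - 2 / PI * a0 * w * ln (Rabs (w / w0)) * 0)) with (- (a0 * Rabs w * r)) by ring.
  replace (- (a0 * Rabs w * 0 + 2 / PI * a0 * w * ln (Rabs (w / w0)) * r)) with (- (2 / PI * a0 * w * ln (Rabs (w / w0)) * r)) by ring.
  f_equal; ring.
Qed.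

Lemma h_cont0 w0 : w0 <> 0 -> continuity_pt (fun w => w * ln (Rabs (w / w0))) 0.
Proof.
  intros Hw0. set (c := Rabs w0).
  assert (Hc : 0 < c) by (apply Rabs_pos_lt; exact Hw0).
  unfold continuity_pt, continue_in, limit1_in, limit_in. simpl. unfold R_dist.
  intros eps He.
  set (q := eps / (2 * c)).
  assert (Hq : 0 < q) by (unfold q; apply Rdiv_lt_0_compat; lra).
  exists (c * Rmin 1 (q * q)). split.
  { apply Rmult_lt_0_compat; [lra|]. apply Rmin_glb_lt; nra. }
  intros x [[_ Hx0] Hx]. rewrite Rminus_0_r in Hx.
  rewrite Rmult_0_l, Rminus_0_r.
  assert (Hxa : 0 < Rabs x) by (apply Rabs_pos_lt; auto).
  set (u := Rabs x / c).
  assert (Hu0 : 0 < u) by (unfold u; apply Rdiv_lt_0_compat; lra).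
  assert (Hum : u < Rmin 1 (q * q)).
  { unfold u. apply (Rmult_lt_reg_l c); [lra|]. replace (c * (Rabs x / c)) with (Rabs x) by (field; lra). lra. }
  assert (Hu1 : u <= 1) by (pose proof (Rmin_l 1 (q*q)); lra).
  assert (Huq : u < q * q) by (pose proof (Rmin_r 1 (q*q)); lra).
  assert (Hab : Rabs (x / w0) = u) by (unfold u, c; apply Rabs_div; exact Hw0).
  rewrite Hab, Rabs_mult.
  destruct (uln_bound u Hu0 Hu1) as [B1 B2].
  assert (Hl : ln u <= 0) by (rewrite <- ln_1; apply ln_le; lra).
  rewrite (Rabs_left1 (ln u)) by lra.
  assert (Hxu : Rabs x = c * u) by (unfold u; field; lra).
  rewrite Hxu.
  assert (Hs : sqrt u < q).
  { rewrite <- (sqrt_Rsqr q) by lra. apply sqrt_lt_1_alt. unfold Rsqr. lra. }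
  assert (Hs0 : 0 <= sqrt u) by apply sqrt_pos.
  replace eps with (2 * c * q) by (unfold q; field; lra).
  replace (c * u * - ln u) with (c * (- (u * ln u))) by ring.
  nra.
Qed.

Lemma h_cont w0 w : w0 <> 0 -> continuity_pt (fun w => w * ln (Rabs (w / w0))) w.
Proof.
  intros Hw0. destruct (Req_dec w 0) as [->|Hw]; [apply h_cont0; exact Hw0|].
  apply (continuity_pt_mult (fun w => w) (fun w => ln (Rabs (w / w0)))).
  - apply derivable_continuous_pt, derivable_pt_id.
  - apply (continuity_pt_comp (fun w => Rabs (w / w0)) ln).
    + apply (continuity_pt_comp (fun w => w / w0) Rabs).
      * apply derivable_continuous_pt. unfold Rdiv. apply derivable_pt_mult; [apply derivable_pt_id| apply derivable_pt_const].
      * apply Rcontinuity_abs.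
    + apply derivable_continuous_pt. exists (/ Rabs (w / w0)). apply derivable_pt_lim_ln.
      apply Rabs_pos_lt. unfold Rdiv. apply Rmult_integral_contrapositive_currified; [exact Hw|].
      apply Rinv_neq_0_compat; exact Hw0.
Qed.

Lemma cpt_const (k x : R) : continuity_pt (fun _ => k) x.
Proof. apply continuity_pt_const. intros a b. reflexivity. Qed.

Lemma cpt_id (x : R) : continuity_pt (fun w => w) x.
Proof. apply derivable_continuous_pt, derivable_pt_id. Qed.

Lemma cpt_th a0 w0 r t w : w0 <> 0 -> continuity_pt (th a0 w0 r t) w.
Proof.
  intros Hw0. unfold th.
  apply (continuity_pt_plus (fun w => - (w * t)) (fun w => - (2 / PI * a0 * w * ln (Rabs (w / w0)) * r))).
  - apply (continuity_pt_opp (fun w => w * t)).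
    apply (continuity_pt_mult (fun w => w) (fun _ => t)); [apply cpt_id|apply cpt_const].
  - apply (continuity_pt_opp (fun w => 2 / PI * a0 * w * ln (Rabs (w / w0)) * r)).
    assert (H : continuity_pt (fun w => (2 / PI * a0 * r) * (w * ln (Rabs (w / w0)))) w).
    { apply (continuity_pt_mult (fun _ => 2 / PI * a0 * r) (fun w => w * ln (Rabs (w / w0))));
        [apply cpt_const| apply h_cont; exact Hw0]. }
    apply continuity_pt_filterlim in H. apply continuity_pt_filterlim.
    replace (2 / PI * a0 * w * ln (Rabs (w / w0)) * r) with (2 / PI * a0 * r * (w * ln (Rabs (w / w0)))) by ring.
    eapply filterlim_ext; [|exact H]. intros y. simpl. ring.
Qed.

Lemma cpt_EE a0 r w : continuity_pt (EE a0 r) w.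
Proof.
  unfold EE. apply (continuity_pt_comp (fun w => - (a0 * Rabs w * r)) exp).
  - apply (continuity_pt_opp (fun w => a0 * Rabs w * r)).
    apply (continuity_pt_mult (fun w => a0 * Rabs w) (fun _ => r)); [|apply cpt_const].
    apply (continuity_pt_mult (fun _ => a0) Rabs); [apply cpt_const|apply Rcontinuity_abs].
  - apply derivable_continuous_pt, derivable_pt_exp.
Qed.

Lemma cont_fr a0 w0 r t w : w0 <> 0 ->
  continuous (fun w => EE a0 r w * cos (th a0 w0 r t w)) w.
Proof.
  intros Hw0. apply continuity_pt_filterlim.
  apply (continuity_pt_mult (EE a0 r) (fun w => cos (th a0 w0 r t w))); [apply cpt_EE|].
  apply (continuity_pt_comp (th a0 w0 r t) cos); [apply cpt_th; exact Hw0| apply continuity_cos].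
Qed.

Lemma cont_fi a0 w0 r t w : w0 <> 0 ->
  continuous (fun w => EE a0 r w * sin (th a0 w0 r t w)) w.
Proof.
  intros Hw0. apply continuity_pt_filterlim.
  apply (continuity_pt_mult (EE a0 r) (fun w => sin (th a0 w0 r t w))); [apply cpt_EE|].
  apply (continuity_pt_comp (th a0 w0 r t) sin); [apply cpt_th; exact Hw0| apply continuity_sin].
Qed.

Definition ff (a0 w0 r t : R) (w : R) : C :=
  Cmult (cexp (0, - (w * t))) (cexp (Copp (Cmult (alpha_pl a0 w0 w) (RtoC r)))).

Lemma ff_ex a0 w0 r t a b : w0 <> 0 -> ex_RInt (ff a0 w0 r t) a b.
Proof.
  intros Hw0.
  apply (ex_RInt_ext (fun w => (EE a0 r w * cos (th a0 w0 r t w), EE a0 r w * sin (th a0 w0 r t w)))).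
  { intros x _. unfold ff. rewrite feq. reflexivity. }
  apply ex_RInt_fct_extend_pair; simpl.
  - apply (ex_RInt_continuous (V:=R_CompleteNormedModule)). intros z _. apply cont_fr; exact Hw0.
  - apply (ex_RInt_continuous (V:=R_CompleteNormedModule)). intros z _. apply cont_fi; exact Hw0.
Qed.

Lemma cos_lb (x : R) : Rabs x <= 1 / 10 + 1 / PI -> 9 / 10 <= cos x.
Proof.
  intros H. pose proof PI2_3_2 as HP.
  assert (Hpi : 1 / PI < 1 / 3).
  { unfold Rdiv. rewrite !Rmult_1_l. apply Rinv_lt_contravar; lra. }
  assert (H1 : - (1/10 + 1/PI) <= x) by (pose proof (Rle_abs (-x)); rewrite Rabs_Ropp in *; lra).
  assert (H2 : x <= 1/10 + 1/PI) by (pose proof (Rle_abs x); lra).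
  destruct (cos_bound x 0) as [B _]; [lra|lra|].
  replace (cos_approx x (2 * 0 + 1)) with (1 - x ^ 2 / 2) in B
    by (unfold cos_approx, cos_term; simpl; field).
  nra.
Qed.

Lemma th_bound a0 w0 w : 0 < a0 -> w0 <> 0 -> Rabs w <= Rabs w0 ->
  Rabs (th a0 w0 (/ (a0 * Rabs w0)) (- / (10 * Rabs w0)) w) <= 1 / 10 + 1 / PI.
Proof.
  intros Ha Hw0 Hw. set (c := Rabs w0) in *.
  assert (Hc : 0 < c) by (apply Rabs_pos_lt; exact Hw0).
  pose proof PI_RGT_0 as HP.
  unfold th. destruct (Req_dec w 0) as [->|Hw'].
  { rewrite !Rmult_0_l, Rmult_0_r, !Rmult_0_l, !Ropp_0, Rplus_0_r, Rabs_R0.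
    assert (0 < 1/PI) by (apply Rdiv_lt_0_compat; lra). lra. }
  set (u := Rabs w / c).
  assert (Hwa : 0 < Rabs w) by (apply Rabs_pos_lt; exact Hw').
  assert (Hu0 : 0 < u) by (unfold u; apply Rdiv_lt_0_compat; lra).
  assert (Hu1 : u <= 1) by (unfold u; apply (Rmult_le_reg_l c); [lra|]; replace (c * (Rabs w / c)) with (Rabs w) by (field; lra); lra).
  assert (Hab : Rabs (w / w0) = u) by (unfold u, c; apply Rabs_div; exact Hw0).
  rewrite Hab.
  destruct (uln_bound u Hu0 Hu1) as [B1 B2].
  assert (B3 : - (u * ln u) <= 1 / 2).
  { assert (0 <= sqrt u) by apply sqrt_pos. assert (u = sqrt u * sqrt u) by (rewrite sqrt_sqrt; lra). pose proof (Rle_0_sqr (2 * sqrt u - 1)). unfold Rsqr in *. nra. }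
  eapply Rle_trans; [apply Rabs_triang|].
  rewrite !Rabs_Ropp.
  apply Rplus_le_compat.
  - rewrite Rabs_mult. rewrite Rabs_Ropp, Rabs_inv, Rabs_mult, (Rabs_pos_eq 10) by lra.
    rewrite (Rabs_pos_eq c) by lra.
    replace (Rabs w * / (10 * c)) with (u / 10) by (unfold u; field; lra). lra.
  - replace (2 / PI * a0 * w * ln u * / (a0 * c)) with ((2 / PI) * ((w / c) * ln u)) by (field; split; lra).
    rewrite Rabs_mult, (Rabs_pos_eq (2/PI)) by (left; apply Rdiv_lt_0_compat; lra).
    assert (Hl : ln u <= 0) by (rewrite <- ln_1; apply ln_le; lra).
    rewrite Rabs_mult, (Rabs_left1 (ln u)) by lra.
    replace (Rabs (w / c)) with u by (unfold u; rewrite Rabs_div by lra; rewrite (Rabs_pos_eq c) by lra; reflexivity).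
    replace (1 / PI) with (2 / PI * (1 / 2)) by (field; lra).
    apply Rmult_le_compat_l; [left; apply Rdiv_lt_0_compat; lra|]. lra.
Qed.

Lemma EE_g a0 w0 w : 0 < a0 -> w0 <> 0 ->
  EE a0 (/ (a0 * Rabs w0)) w = gexp (Rabs w0) w.
Proof.
  intros Ha Hw0. assert (0 < Rabs w0) by (apply Rabs_pos_lt; exact Hw0).
  unfold EE, gexp. f_equal. f_equal. field. lra.
Qed.

Lemma gexp_pos c w : 0 < gexp c w.
Proof. apply exp_pos. Qed.

Lemma ex_gexp c a b : 0 < c -> ex_RInt (gexp c) a b.
Proof. intros Hc. eexists. apply gexp_RInt. exact Hc. Qed.

Lemma fr_lower a0 w0 a b : 0 < a0 -> w0 <> 0 -> a <= - Rabs w0 -> Rabs w0 <= b ->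
  Rabs w0 * (18 / 10 - 38 / 10 * exp (-1)) <=
  RInt (fun w => EE a0 (/ (a0 * Rabs w0)) w * cos (th a0 w0 (/ (a0 * Rabs w0)) (- / (10 * Rabs w0)) w)) a b.
Proof.
  intros Ha Hw0 Hab Hb.
  set (c := Rabs w0) in *.
  assert (Hc : 0 < c) by (apply Rabs_pos_lt; exact Hw0).
  set (fr := fun w => EE a0 (/ (a0 * c)) w * cos (th a0 w0 (/ (a0 * c)) (- / (10 * c)) w)).
  assert (HE : forall w, EE a0 (/ (a0 * c)) w = gexp c w) by (intros w; unfold c; apply EE_g; [exact Ha|exact Hw0]).
  assert (Hex : forall x y, ex_RInt fr x y).
  { intros x y. apply (ex_RInt_continuous (V:=R_CompleteNormedModule)). intros z _. apply cont_fr; exact Hw0. }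
  rewrite <- (RInt_Chasles fr a (-c) b) by (apply Hex).
  rewrite <- (RInt_Chasles fr (-c) c b) by (apply Hex).
  assert (Hlow : forall x y, x <= y -> RInt (fun w => - gexp c w) x y <= RInt fr x y).
  { intros x y Hxy. apply RInt_le; [exact Hxy| |apply Hex|].
    - eexists. apply (is_RInt_opp (V:=R_NormedModule) (gexp c)). apply gexp_RInt. exact Hc.
    - intros w _. unfold fr. rewrite HE.
      pose proof (gexp_pos c w). pose proof (COS_bound (th a0 w0 (/ (a0 * c)) (- / (10 * c)) w)).
      assert (0 <= gexp c w * (cos (th a0 w0 (/ (a0 * c)) (- / (10 * c)) w) + 1)) by (apply Rmult_le_pos; lra).
      lra. }
  assert (Hneg : forall x y, RInt (fun w => - gexp c w) x y = - (Pg c y - Pg c x)).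
  { intros x y. apply is_RInt_unique. apply (is_RInt_opp (V:=R_NormedModule) (gexp c)). apply gexp_RInt. exact Hc. }
  assert (Hmid : RInt (fun w => 9 / 10 * gexp c w) (-c) c <= RInt fr (-c) c).
  { apply RInt_le; [lra| |apply Hex|].
    - eexists. apply (is_RInt_scal (V:=R_NormedModule) (gexp c)). apply gexp_RInt. exact Hc.
    - intros w Hw. unfold fr. rewrite HE.
      pose proof (gexp_pos c w).
      assert (Hcos : 9/10 <= cos (th a0 w0 (/ (a0 * c)) (- / (10 * c)) w)).
      { apply cos_lb. apply th_bound; [exact Ha|exact Hw0|]. fold c. apply Rabs_le. split; lra. }
      assert (0 <= gexp c w * (cos (th a0 w0 (/ (a0 * c)) (- / (10 * c)) w) - 9/10)) by (apply Rmult_le_pos; lra).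
      lra. }
  assert (Hmid' : RInt (fun w => 9 / 10 * gexp c w) (-c) c = 9 / 10 * (Pg c c - Pg c (-c))).
  { apply is_RInt_unique. apply (is_RInt_scal (V:=R_NormedModule) (gexp c)). apply gexp_RInt. exact Hc. }
  pose proof (Hlow a (-c) Hab) as L1. pose proof (Hlow c b Hb) as L3.
  rewrite Hneg in L1, L3. rewrite Hmid' in Hmid.
  rewrite (Pg_neg c a), (Pg_neg c (-c)), (Pg_pos c c), (Pg_pos c b) in * by lra.
  replace (- c / c) with (-1) in * by (field; lra).
  replace (- (c / c)) with (-1) in * by (field; lra).
  pose proof (exp_pos (a / c)). pose proof (exp_pos (- (b / c))).
  assert (0 <= c * exp (a / c)) by (apply Rmult_le_pos; lra).
  assert (0 <= c * exp (- (b / c))) by (apply Rmult_le_pos; lra).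
  unfold plus; simpl. lra.
Qed.

Lemma lim_lower (f : R -> C) (c m0 : R) (l : C) : 0 < c ->
  is_RInt_gen f (Rbar_locally m_infty) (Rbar_locally p_infty) l ->
  (forall a b z, a <= - c -> c <= b -> is_RInt f a b z -> m0 <= fst z) ->
  m0 <= fst l.
Proof.
  intros Hc Hl Hb.
  destruct (Rle_lt_dec m0 (fst l)) as [H|H]; [exact H|exfalso].
  assert (He : 0 < m0 - fst l) by lra.
  unfold is_RInt_gen in Hl.
  apply (filterlimi_locally (F := filter_prod (Rbar_locally m_infty) (Rbar_locally p_infty))) with (eps := mkposreal _ He) in Hl.
  destruct Hl as [Q R' [M1 HQ] [M2 HR] HP].
  destruct (HP (Rmin M1 (- c) - 1) (Rmax M2 c + 1)) as [z [Hz Hball]].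
  - apply HQ. pose proof (Rmin_l M1 (-c)). lra.
  - apply HR. pose proof (Rmax_l M2 c). lra.
  - simpl in Hz.
    assert (m0 <= fst z).
    { apply (Hb (Rmin M1 (- c) - 1) (Rmax M2 c + 1) z); [pose proof (Rmin_r M1 (-c)); lra| pose proof (Rmax_r M2 c); lra| exact Hz]. }
    destruct Hball as [B1 _]. simpl in B1. unfold ball in B1; simpl in B1. unfold AbsRing_ball in B1.
    unfold abs, minus, plus, opp in B1; simpl in B1.
    destruct z as [z1 z2]; destruct l as [l1 l2]; simpl in *.
    pose proof (Rle_abs (z1 + - l1)). lra.
Qed.

Lemma pn_eq (p q : R) : @prod_norm R_AbsRing R_NormedModule R_NormedModule (p, q) = sqrt (Rabs p ^ 2 + Rabs q ^ 2).
Proof. reflexivity. Qed.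

Lemma ff_norm a0 w0 t w : 0 < a0 -> w0 <> 0 ->
  @norm R_AbsRing C_R_NormedModule (ff a0 w0 (/ (a0 * Rabs w0)) t w) <= gexp (Rabs w0) w.
Proof.
  intros Ha Hw0. unfold ff. rewrite feq, EE_g by assumption.
  simpl. eapply Rle_trans; [right; apply pn_eq|]. rewrite <- !Rsqr_pow2, <- !Rsqr_abs, !Rsqr_pow2. simpl.
  set (E := gexp (Rabs w0) w). set (q := th a0 w0 (/ (a0 * Rabs w0)) t w).
  pose proof (gexp_pos (Rabs w0) w). fold E in H.
  replace ((E * cos q) * ((E * cos q) * 1) + (E * sin q) * ((E * sin q) * 1)) with (E ^ 2).
  - rewrite sqrt_pow2 by lra. lra.
  - pose proof (sin2_cos2 q). unfold Rsqr in *. nra.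
Qed.

Lemma fst_int a0 w0 r t a b z : w0 <> 0 -> is_RInt (ff a0 w0 r t) a b z ->
  fst z = RInt (fun w => EE a0 r w * cos (th a0 w0 r t w)) a b.
Proof.
  intros Hw0 Hz. apply is_RInt_fct_extend_fst in Hz.
  symmetry. apply is_RInt_unique.
  eapply is_RInt_ext; [|exact Hz]. intros x _. unfold ff. rewrite feq. reflexivity.
Qed.

Lemma e_bound : 38 / 10 * exp (-1) < 18 / 10.
Proof.
  assert (H := exp_ineq1 (1/2) ltac:(lra)).
  assert (He : exp 1 = exp (1/2) * exp (1/2)) by (rewrite <- exp_plus; f_equal; lra).
  assert (exp 1 > 9/4) by nra.
  replace (exp (-1)) with (/ exp 1) by (rewrite <- exp_Ropp; f_equal; ring).
  assert (0 < exp 1) by apply exp_pos.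
  apply (Rmult_lt_reg_r (exp 1)); [lra|].
  rewrite Rmult_assoc, Rinv_l by lra. lra.
Qed.

Theorem theorem4 (a0 w0 : R) (ha0 : 0 < a0) (hw0 : w0 <> 0) :
  exists (x : vec3) (t : R) (v : C),
    x <> (0, 0, 0) /\ t < 0 /\ is_K a0 w0 x t v /\ v <> 0%C.
Proof.
  set (c := Rabs w0).
  assert (Hc : 0 < c) by (apply Rabs_pos_lt; exact hw0).
  set (r := / (a0 * c)).
  assert (Hr : 0 < r) by (apply Rinv_0_lt_compat; apply Rmult_lt_0_compat; lra).
  set (t := - / (10 * c)).
  assert (Ht : t < 0) by (unfold t; apply Ropp_lt_gt_0_contravar; apply Rinv_0_lt_compat; lra).
  assert (Hn : norm3 (r, 0, 0) = r).
  { unfold norm3. replace (r * r + 0 * 0 + 0 * 0) with (r ^ 2) by ring. apply sqrt_pow2. lra. }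
  destruct (exists_gen (V:=C_R_CompleteNormedModule) (ff a0 w0 r t) c Hc) as [l Hl].
  { intros w. unfold r, c. apply ff_norm; assumption. }
  { intros a b. apply ff_ex. exact hw0. }
  assert (Hlow : c * (18 / 10 - 38 / 10 * exp (-1)) <= fst l).
  { apply (lim_lower (ff a0 w0 r t) c _ l Hc Hl).
    intros a b z Ha Hb Hz. rewrite (fst_int _ _ _ _ _ _ _ hw0 Hz).
    unfold r, t, c. apply fr_lower; assumption. }
  assert (Hpos : 0 < fst l).
  { pose proof e_bound. assert (0 < c * (18 / 10 - 38 / 10 * exp (-1))) by (apply Rmult_lt_0_compat; lra). lra. }
  set (k := / sqrt (2 * PI)).
  assert (Hk : 0 < k).
  { unfold k. apply Rinv_0_lt_compat. apply sqrt_lt_R0. pose proof PI_RGT_0. lra. }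
  exists (r, 0, 0), t, (Cmult (RtoC k) (Cmult (RtoC k) l)).
  split; [|split; [exact Ht|split]].
  - intros Heq. injection Heq. intros. lra.
  - exists (Cmult (RtoC k) l). split; [|reflexivity].
    exists l. split; [|reflexivity].
    rewrite Hn. exact Hl.
  - intros Heq. apply (f_equal fst) in Heq. destruct l as [l1 l2]. simpl in Heq, Hpos.
    assert (k * (k * l1) = 0) by (rewrite <- Heq; ring).
    assert (0 < k * (k * l1)) by (apply Rmult_lt_0_compat; [lra|apply Rmult_lt_0_compat; lra]).
    lra.
Qed.
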